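(* On a normal almost contact manifold $(M,\phi,\xi,\eta)$, the set $\mathfrak{hol}(M)$ of contact-holomorphic vector fields is a Lie subalgebra of the Lie algebra $\Gamma(TM)$ of vector fields.
   Context: An almost contact structure on a $(2n+1)$-manifold is $(\phi,\xi,\eta)$ with $\phi$ a $(1,1)$-tensor, $\xi$ a vector field, $\eta$ a 1-form, $\phi^2=-I+\eta\otimes\xi$, $\eta(\xi)=1$. It is normal if $[\phi,\phi](X,Y)+2d\eta(X,Y)\xi=0$, where $[\phi,\phi](X,Y)=\phi^2[X,Y]+[\phi X,\phi Y]-\phi[\phi X,Y]-\phi[X,\phi Y]$ and $d\eta(X,Y)=\frac12(X\eta(Y)-Y\eta(X)-\eta([X,Y]))$. A (local) vector field $X$ is contact-holomorphic if $(\mathcal{L}_X\phi)Y=\eta([X,\phi Y])\xi$ for all vector fields $Y$. *)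

(* Defs.v *)
From HB Require Import structures.
From mathcomp Require Import all_boot all_order all_algebra.
From mathcomp Require Import all_classical all_reals all_analysis.
Set Implicit Arguments. Unset Strict Implicit. Unset Printing Implicit Defensive.
Import Order.TTheory GRing.Theory Num.Theory.
Import numFieldNormedType.Exports.
Local Open Scope classical_set_scope.
Local Open Scope ring_scope.

Section Euclid.
Context {R : realType} {m : nat} {V : normedModType R}.

Fixpoint iterD (vs : seq 'rV[R]_m) (f : 'rV[R]_m -> V) : 'rV[R]_m -> V :=
  match vs with
  | [::] => f
  | v :: vs' => 'D_v (iterD vs' f)
  end.

Definition smooth_on (U : set 'rV[R]_m) (f : 'rV[R]_m -> V) : Prop :=
  open U /\ forall (vs : seq 'rV[R]_m) (x : 'rV[R]_m), U x -> differentiable (iterD vs f) x.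
End Euclid.

Record smooth_atlas (R : realType) (m : nat) (M : topologicalType) := SmoothAtlas {
  cidx : Type;
  cdom : cidx -> set M;
  cfwd : cidx -> M -> 'rV[R]_m;
  cbwd : cidx -> 'rV[R]_m -> M;
  cdom_open : forall i, open (cdom i);
  ccover : forall p : M, exists i, cdom i p;
  cimg_open : forall i, open (cfwd i @` cdom i);
  cbwd_fwd : forall i p, cdom i p -> cbwd i (cfwd i p) = p;
  cfwd_cont : forall i, {within cdom i, continuous (cfwd i)};
  cbwd_cont : forall i, {within cfwd i @` cdom i, continuous (cbwd i)};
  ctrans : forall i j,
    smooth_on (cfwd i @` (cdom i `&` cdom j)) (cfwd j \o cbwd i)
}.

Section OnManifold.
Context {R : realType} {m : nat} {M : topologicalType} (A : smooth_atlas R m M).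

Definition smooth (f : M -> R) : Prop :=
  forall i, smooth_on (@cfwd _ _ _ A i @` @cdom _ _ _ A i) (f \o @cbwd _ _ _ A i).

(* vector fields: derivations of C^oo(M), normalized to vanish on
   non-smooth functions (so that each derivation has a unique representative) *)
Definition vfield := (M -> R) -> (M -> R).

Definition is_vf (X : vfield) : Prop :=
  [/\ forall g, ~ smooth g -> X g = (fun _ => 0),
      forall g, smooth g -> smooth (X g),
      forall (a : R) g h, smooth g -> smooth h ->
        X (fun x => a * g x + h x) = (fun x => a * X g x + X h x)
    & forall g h, smooth g -> smooth h ->
        X (fun x => g x * h x) = (fun x => g x * X h x + h x * X g x)].

Definition vzero : vfield := fun _ _ => 0.
Definition vadd (X Y : vfield) : vfield := fun g x => X g x + Y g x.
Definition vopp (X : vfield) : vfield := fun g x => - X g x.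
Definition rscale (c : R) (X : vfield) : vfield := fun g x => c * X g x.
Definition vscale (f : M -> R) (X : vfield) : vfield := fun g x => f x * X g x.
Definition vbr (X Y : vfield) : vfield := fun g x => X (Y g) x - Y (X g) x.

Definition is_tensor11 (phi : vfield -> vfield) : Prop :=
  (forall X, is_vf X -> is_vf (phi X)) /\
  (forall f X Y, smooth f -> is_vf X -> is_vf Y ->
     phi (vadd (vscale f X) Y) = vadd (vscale f (phi X)) (phi Y)).

Definition is_1form (eta : vfield -> (M -> R)) : Prop :=
  (forall X, is_vf X -> smooth (eta X)) /\
  (forall f X Y, smooth f -> is_vf X -> is_vf Y ->
     eta (vadd (vscale f X) Y) = (fun x => f x * eta X x + eta Y x)).

Definition almost_contact (phi : vfield -> vfield) (xi : vfield)
    (eta : vfield -> (M -> R)) : Prop :=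
  [/\ is_tensor11 phi, is_vf xi, is_1form eta,
      forall X, is_vf X -> phi (phi X) = vadd (vopp X) (vscale (eta X) xi)
    & eta xi = (fun _ => 1)].

Definition nijenhuis (phi : vfield -> vfield) (X Y : vfield) : vfield :=
  vadd (vadd (phi (phi (vbr X Y))) (vbr (phi X) (phi Y)))
       (vadd (vopp (phi (vbr (phi X) Y))) (vopp (phi (vbr X (phi Y))))).

Definition deta (eta : vfield -> (M -> R)) (X Y : vfield) : M -> R :=
  fun x => 2^-1 * (X (eta Y) x - Y (eta X) x - eta (vbr X Y) x).

Definition normal_ac (phi : vfield -> vfield) (xi : vfield)
    (eta : vfield -> (M -> R)) : Prop :=
  forall X Y, is_vf X -> is_vf Y ->
    vadd (nijenhuis phi X Y) (vscale (fun x => 2 * deta eta X Y x) xi) = vzero.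

Definition lie_phi (phi : vfield -> vfield) (X Y : vfield) : vfield :=
  vadd (vbr X (phi Y)) (vopp (phi (vbr X Y))).

Definition contact_hol (phi : vfield -> vfield) (xi : vfield)
    (eta : vfield -> (M -> R)) (X : vfield) : Prop :=
  is_vf X /\
  forall Y, is_vf Y -> lie_phi phi X Y = vscale (eta (vbr X (phi Y))) xi.

Definition lie_subalgebra (S : vfield -> Prop) : Prop :=
  [/\ forall X, S X -> is_vf X,
      S vzero,
      forall X Y, S X -> S Y -> S (vadd X Y),
      forall (c : R) X, S X -> S (rscale c X)
    & forall X Y, S X -> S Y -> S (vbr X Y)].
End OnManifold.

(* Main.v *)
Require Import Defs.
From HB Require Import structures.
From mathcomp Require Import all_boot all_order all_algebra.
From mathcomp Require Import all_classical all_reals all_analysis.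
From mathcomp Require Import ring lra.

Module Helpers.
Set Implicit Arguments. Unset Strict Implicit. Unset Printing Implicit Defensive.
Import Order.TTheory GRing.Theory Num.Theory.
Import numFieldNormedType.Exports.
Local Open Scope classical_set_scope.
Local Open Scope ring_scope.

Lemma near_eq_differentiable (R : realType) (V W : normedModType R)
  (f g : V -> W) (x : V) :
  (\forall y \near x, f y = g y) -> differentiable f x -> differentiable g x.
Proof.
move=> fg df.
have E : g \o shift x = cst (g x) + 'd f x +o_ 0 id.
  have /eqaddoP := diff_locally df.
  move=> H; apply/eqaddoP => eps eps0.
  have := H eps eps0.
  have fg0 : \forall h \near (0:V), f (h + x) = g (h + x).
    rewrite (near_shift x) /=. near=> y. by rewrite /= sub0r subrK; near: y.
  have e1 : f x = g x by apply: (nbhs_singleton fg).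
  apply: filterS2 fg0 => h e2.
  by rewrite !fctE /= e1 e2.
apply/diff_locallyP.
by rewrite (diff_unique (diff_continuous df) E); split => //; apply: diff_continuous.
Unshelve. all: by end_near.
Qed.
Section FU.
Context {R : realType} {m : nat} (U : set 'rV[R]_m) (hU : open U).
Local Notation E := 'rV[R]_m.
Implicit Types (f g : E -> R^o).

Definition Fk k f := forall vs : seq E, (size vs <= k)%N -> forall x, U x -> differentiable (Defs.iterD vs f) x.
Definition Finf f := forall (vs : seq E) x, U x -> differentiable (Defs.iterD vs f) x.

Lemma nearU x : U x -> \forall y \near x, U y.
Proof. move=> Ux. exact: (open_nbhs_nbhs (conj hU Ux)). Qed.

Lemma iterD_rcons vs v f : Defs.iterD (rcons vs v) f = Defs.iterD vs ('D_v f).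
Proof. by elim: vs => //= w vs ->. Qed.

Lemma iterD_eqU vs f g : (forall x, U x -> f x = g x) ->
  forall x, U x -> Defs.iterD vs f x = Defs.iterD vs g x.
Proof.
move=> fg; elim: vs => [|v vs IH] x Ux //=; first exact: fg.
apply: near_eq_derive; apply: filterS (nearU Ux) => y Uy; exact: IH.
Qed.

Lemma diff_eqU (h1 h2 : E -> R^o) x : (forall y, U y -> h1 y = h2 y) -> U x ->
  differentiable h1 x -> differentiable h2 x.
Proof.
move=> e Ux; apply: near_eq_differentiable; apply: filterS (nearU Ux) => y Uy; exact: e.
Qed.

Lemma FkD k f g : Fk k f -> Fk k g ->
  (forall vs : seq E, (size vs <= k)%N -> forall x, U x ->
     Defs.iterD vs (f + g) x = Defs.iterD vs f x + Defs.iterD vs g x) /\ Fk k (f + g).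
Proof.
move=> Ff Fg.
have eq : forall vs : seq E, (size vs <= k)%N -> forall x, U x ->
     Defs.iterD vs (f + g) x = Defs.iterD vs f x + Defs.iterD vs g x.
  elim => [|v vs IH] //= sz x Ux.
  have sz' : (size vs <= k)%N by apply: leq_trans sz; exact: leqnSn.
  rewrite (@near_eq_derive _ _ _ _ (Defs.iterD vs f + Defs.iterD vs g : E -> R^o)); last first.
    apply: filterS (nearU Ux) => y Uy; exact: IH.
  rewrite deriveD //; apply: diff_derivable; [exact: Ff|exact: Fg].
split => // vs sz x Ux.
apply: (@diff_eqU (Defs.iterD vs f + Defs.iterD vs g)) => //.
  by move=> y Uy; rewrite eq.
by apply: differentiableD; [exact: Ff|exact: Fg].
Qed.

Lemma Finf_Fk k f : Finf f -> Fk k f.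
Proof. by move=> F vs _; exact: F. Qed.


Lemma Finf_D v f : Finf f -> Finf ('D_v f).
Proof. by move=> F vs x Ux; rewrite -iterD_rcons; exact: F. Qed.

Lemma FkM k f g : Finf f -> Finf g -> Fk k (f * g).
Proof.
elim: k f g => [|k IH] f g Ff Fg vs.
  by case: vs => //= _ x Ux; apply: differentiableM; [exact: (Ff [::])|exact: (Fg [::])].
case/lastP: vs => [|vs v] sz x Ux.
  by apply: differentiableM; [exact: (Ff [::])|exact: (Fg [::])].
rewrite size_rcons ltnS in sz.
rewrite iterD_rcons.
have [_ Fh] := FkD (IH _ _ Ff (Finf_D v Fg)) (IH _ _ Fg (Finf_D v Ff)).
apply: (diff_eqU _ Ux (Fh _ sz _ Ux)) => y Uy.
apply: iterD_eqU => // z Uz.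
rewrite deriveM /=; first by [].
  by apply: diff_derivable; exact: (Ff [::]).
by apply: diff_derivable; exact: (Fg [::]).
Qed.

Lemma FinfM f g : Finf f -> Finf g -> Finf (f * g).
Proof. by move=> Ff Fg vs x Ux; apply: (@FkM (size vs)). Qed.

Lemma FinfDD f g : Finf f -> Finf g -> Finf (f + g).
Proof.
move=> Ff Fg vs x Ux.
by have [_ H] := @FkD (size vs) f g (Finf_Fk Ff) (Finf_Fk Fg); apply: H.
Qed.

Lemma Finf_cst (c : R) : Finf (cst c).
Proof.
have : forall vs, exists c' : R, Defs.iterD vs (cst c : E -> R^o) = cst c'.
  elim => [|v vs [c' IH]] /=; first by exists c.
  exists 0; rewrite IH; apply/funext => y; exact: derive_cst.
by move=> H vs x Ux; have [c' ->] := H vs; exact: differentiable_cst.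
Qed.
End FU.

Section Manifold.
Context {R : realType} {m : nat} {M : topologicalType} (A : smooth_atlas R m M).
Local Notation sm := (smooth A).
Local Notation vf := (is_vf A).
Implicit Types (f g h : M -> R) (X Y Z U V : @vfield R M).

Lemma sm_cst (c : R) : sm (fun _ => c).
Proof. move=> i; split; [exact: cimg_open | exact: Finf_cst]. Qed.

Lemma sm_add f g : sm f -> sm g -> sm (fun x => f x + g x).
Proof.
move=> sf sg i; have [oU Ff] := sf i; have [_ Fg] := sg i; split => //.
exact: (FinfDD oU Ff Fg).
Qed.

Lemma sm_mul f g : sm f -> sm g -> sm (fun x => f x * g x).
Proof.
move=> sf sg i; have [oU Ff] := sf i; have [_ Fg] := sg i; split => //.
exact: (FinfM oU Ff Fg).
Qed.

Lemma sm_scal (c : R) f : sm f -> sm (fun x => c * f x).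
Proof. by move=> sf; apply: sm_mul => //; exact: sm_cst. Qed.

Lemma sm_opp f : sm f -> sm (fun x => - f x).
Proof.
move=> sf; rewrite (_ : (fun x => - f x) = (fun x => -1 * f x)); first exact: sm_scal.
by apply/funext => x; rewrite mulN1r.
Qed.

Lemma sm_sub f g : sm f -> sm g -> sm (fun x => f x - g x).
Proof. by move=> sf sg; apply: sm_add => //; exact: sm_opp. Qed.

Lemma vf_ns X g : vf X -> ~ sm g -> X g = (fun _ => 0).
Proof. by case=> H _ _ _; exact: H. Qed.

Lemma vf_sm X g : vf X -> sm g -> sm (X g).
Proof. by case=> _ H _ _; exact: H. Qed.

Lemma vfL X (a : R) g h : vf X -> sm g -> sm h ->
  X (fun x => a * g x + h x) = (fun x => a * X g x + X h x).
Proof. by case=> _ _ H _; exact: H. Qed.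

Lemma vfM X g h : vf X -> sm g -> sm h ->
  X (fun x => g x * h x) = (fun x => g x * X h x + h x * X g x).
Proof. by case=> _ _ _ H; exact: H. Qed.

Lemma vf0 X : vf X -> X (fun _ => 0) = (fun _ => 0).
Proof.
move=> hX; have := vfL 1 hX (sm_cst 0) (sm_cst 0).
rewrite (_ : (fun _ : M => 1 * 0 + 0) = (fun _ => 0 : R)); last first.
  by apply/funext => x; rewrite mulr0 addr0.
move=> H; apply/funext => x; have := congr1 (fun F => F x) H => /=.
set t := X _ x; lra.
Qed.

Lemma vfD X g h : vf X -> sm g -> sm h ->
  X (fun x => g x + h x) = (fun x => X g x + X h x).
Proof.
move=> hX sg sh; have := vfL 1 hX sg sh.
rewrite (_ : (fun x => 1 * g x + h x) = (fun x => g x + h x)); last first.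
  by apply/funext => x; rewrite mul1r.
by move=> ->; apply/funext => x; rewrite mul1r.
Qed.

Lemma vfZ X (a : R) g : vf X -> sm g ->
  X (fun x => a * g x) = (fun x => a * X g x).
Proof.
move=> hX sg; have := vfL a hX sg (sm_cst 0).
rewrite (_ : (fun x => a * g x + 0) = (fun x => a * g x)); last first.
  by apply/funext => x; rewrite addr0.
by rewrite vf0 // => ->; apply/funext => x; rewrite addr0.
Qed.

Lemma vfN X g : vf X -> sm g -> X (fun x => - g x) = (fun x => - X g x).
Proof.
move=> hX sg; rewrite (_ : (fun x => - g x) = (fun x => -1 * g x)); last first.
  by apply/funext => x; rewrite mulN1r.
by rewrite vfZ //; apply/funext => x; rewrite mulN1r.
Qed.

Lemma vfB X g h : vf X -> sm g -> sm h ->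
  X (fun x => g x - h x) = (fun x => X g x - X h x).
Proof.
move=> hX sg sh; rewrite vfD //; last exact: sm_opp.
by rewrite vfN.
Qed.

Lemma vf_ext X Y : vf X -> vf Y -> (forall g, sm g -> X g = Y g) -> X = Y.
Proof.
move=> hX hY H; apply/funext => g; case: (pselect (sm g)) => [/H //|ng].
by rewrite (vf_ns hX ng) (vf_ns hY ng).
Qed.

Lemma vf_zero : vf (vzero (R:=R) (M:=M)).
Proof.
split => //.
- by move=> g _; exact: sm_cst.
- by move=> a g h _ _; apply/funext => x; rewrite /vzero; ring.
- by move=> g h _ _; apply/funext => x; rewrite /vzero; ring.
Qed.

Lemma vf_add X Y : vf X -> vf Y -> vf (vadd X Y).
Proof.
move=> hX hY; split => [g ng|g sg|a g h sg sh|g h sg sh]; rewrite /vadd.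
- by rewrite (vf_ns hX ng) (vf_ns hY ng); apply/funext => x; rewrite addr0.
- by apply: sm_add; apply: vf_sm.
- by rewrite (vfL _ hX) // (vfL _ hY) //; apply/funext => x; ring.
- by rewrite (vfM hX) // (vfM hY) //; apply/funext => x; ring.
Qed.

Lemma vf_vscale f X : sm f -> vf X -> vf (vscale f X).
Proof.
move=> sf hX; split => [g ng|g sg|a g h sg sh|g h sg sh]; rewrite /vscale.
- by rewrite (vf_ns hX ng); apply/funext => x; rewrite mulr0.
- by apply: sm_mul => //; apply: vf_sm.
- by rewrite (vfL _ hX) //; apply/funext => x; ring.
- by rewrite (vfM hX) //; apply/funext => x; ring.
Qed.

Lemma vf_rscale (c : R) X : vf X -> vf (rscale c X).
Proof. by move=> hX; apply: (vf_vscale (sm_cst c) hX). Qed.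

Lemma vf_opp X : vf X -> vf (vopp X).
Proof.
move=> hX; rewrite (_ : vopp X = rscale (-1) X); first exact: vf_rscale.
by apply/funext => g; apply/funext => x; rewrite /vopp /rscale mulN1r.
Qed.

Lemma vf_br X Y : vf X -> vf Y -> vf (vbr X Y).
Proof.
move=> hX hY; split => [g ng|g sg|a g h sg sh|g h sg sh]; rewrite /vbr.
- rewrite (vf_ns hX ng) (vf_ns hY ng) (vf0 hX) (vf0 hY).
  by apply/funext => x; rewrite subrr.
- by apply: sm_sub; apply: vf_sm => //; apply: vf_sm.
- rewrite (vfL _ hX) // (vfL _ hY) //.
  rewrite (vfL _ hX); try exact: vf_sm.
  rewrite (vfL _ hY); try exact: vf_sm.
  by apply/funext => x; ring.
- rewrite (vfM hX sg sh) (vfM hY sg sh).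
  rewrite (vfD hX); try by apply: sm_mul => //; apply: vf_sm.
  rewrite (vfD hY); try by apply: sm_mul => //; apply: vf_sm.
  rewrite (vfM hX sg (vf_sm hY sh)) (vfM hX sh (vf_sm hY sg)).
  rewrite (vfM hY sg (vf_sm hX sh)) (vfM hY sh (vf_sm hX sg)).
  by apply/funext => x; ring.
Qed.

Ltac vfa := repeat first [ assumption | exact: vf_zero | apply: vf_br | apply: vf_add
  | apply: vf_opp | apply: vf_rscale | apply: vf_vscale | exact: sm_cst | apply: vf_sm
  | apply: sm_add | apply: sm_mul | apply: sm_sub | apply: sm_opp | apply: sm_scal ].

Lemma br0_l U : vf U -> vbr vzero U = vzero.
Proof.
move=> hU; apply/funext => g; apply/funext => x; rewrite /vbr /vzero /=.
by rewrite (vf0 hU) subrr.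
Qed.

Lemma br0_r X : vf X -> vbr X vzero = vzero.
Proof.
move=> hX; apply/funext => g; apply/funext => x; rewrite /vbr /vzero /=.
by rewrite (vf0 hX) subrr.
Qed.

Lemma brD_l X Z U : vf X -> vf Z -> vf U ->
  vbr (vadd X Z) U = vadd (vbr X U) (vbr Z U).
Proof.
move=> hX hZ hU; apply: vf_ext; [vfa|vfa|] => g sg.
rewrite /vbr /vadd /= (vfD hU (vf_sm hX sg) (vf_sm hZ sg)).
by apply/funext => x; ring.
Qed.

Lemma brD_r X U V : vf X -> vf U -> vf V ->
  vbr X (vadd U V) = vadd (vbr X U) (vbr X V).
Proof.
move=> hX hU hV; apply: vf_ext; [vfa|vfa|] => g sg.
rewrite /vbr /vadd /= (vfD hX (vf_sm hU sg) (vf_sm hV sg)).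
by apply/funext => x; ring.
Qed.

Lemma brN_r X U : vf X -> vf U -> vbr X (vopp U) = vopp (vbr X U).
Proof.
move=> hX hU; apply: vf_ext; [vfa|vfa|] => g sg.
rewrite /vbr /vopp /= (vfN hX (vf_sm hU sg)).
by apply/funext => x; ring.
Qed.

Lemma brZ_l (c : R) X U : vf X -> vf U -> vbr (rscale c X) U = rscale c (vbr X U).
Proof.
move=> hX hU; apply: vf_ext; [vfa|vfa|] => g sg.
rewrite /vbr /rscale /= (vfZ _ hU (vf_sm hX sg)).
by apply/funext => x; ring.
Qed.

Lemma brS_r X f U : vf X -> sm f -> vf U ->
  vbr X (vscale f U) = vadd (vscale (X f) U) (vscale f (vbr X U)).
Proof.
move=> hX sf hU; apply: vf_ext; [vfa|vfa|] => g sg.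
rewrite /vbr /vscale /vadd /= (vfM hX sf (vf_sm hU sg)).
by apply/funext => x; ring.
Qed.

Lemma br_jacobi X Z U : vf X -> vf Z -> vf U ->
  vbr (vbr X Z) U = vadd (vbr X (vbr Z U)) (vopp (vbr Z (vbr X U))).
Proof.
move=> hX hZ hU; apply: vf_ext; [vfa|vfa|] => g sg.
rewrite /vbr /vadd /vopp /=.
rewrite (vfB hU (vf_sm hX (vf_sm hZ sg)) (vf_sm hZ (vf_sm hX sg))).
rewrite (vfB hX (vf_sm hZ (vf_sm hU sg)) (vf_sm hU (vf_sm hZ sg))).
rewrite (vfB hZ (vf_sm hX (vf_sm hU sg)) (vf_sm hU (vf_sm hX sg))).
by apply/funext => x; ring.
Qed.

Section Tensor.
Variable phi : @vfield R M -> @vfield R M.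
Hypothesis hT : is_tensor11 A phi.

Lemma phi_vf X : vf X -> vf (phi X).
Proof. by case: hT => H _; exact: H. Qed.

Lemma vscale1 X : vscale (fun _ => 1) X = X.
Proof. by apply/funext => g; apply/funext => x; rewrite /vscale mul1r. Qed.

Lemma phiD X Y : vf X -> vf Y -> phi (vadd X Y) = vadd (phi X) (phi Y).
Proof.
move=> hX hY; case: hT => _ H.
by rewrite -{1}(vscale1 X) H //; [rewrite vscale1 | exact: sm_cst].
Qed.

Lemma phi0 : phi vzero = vzero.
Proof.
have E : vadd (@vzero R M) vzero = vzero.
  by apply/funext => g; apply/funext => x; rewrite /vadd /vzero addr0.
have := phiD vf_zero vf_zero; rewrite E => H.
apply/funext => g; apply/funext => x.
have := congr1 (fun F => F g x) H; rewrite /vadd /vzero /=.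
set t := phi _ g x; lra.
Qed.

Lemma phiS f X : sm f -> vf X -> phi (vscale f X) = vscale f (phi X).
Proof.
move=> sf hX; case: hT => _ H.
have E : forall Y, vadd Y (@vzero R M) = Y.
  by move=> Y; apply/funext => g; apply/funext => x; rewrite /vadd /vzero addr0.
by rewrite -{1}(E (vscale f X)) H // ?phi0 ?E //; exact: vf_zero.
Qed.

Lemma phiN X : vf X -> phi (vopp X) = vopp (phi X).
Proof.
move=> hX.
have E : forall Y, vopp Y = vscale (fun _ => -1) Y.
  by move=> Y; apply/funext => g; apply/funext => x; rewrite /vscale /vopp mulN1r.
by rewrite !E phiS //; exact: sm_cst.
Qed.
End Tensor.

Section Form.
Variable eta : @vfield R M -> (M -> R).
Hypothesis hE : is_1form A eta.

Lemma eta_sm X : vf X -> sm (eta X).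
Proof. by case: hE => H _; exact: H. Qed.

Lemma etaD X Y : vf X -> vf Y -> eta (vadd X Y) = (fun x => eta X x + eta Y x).
Proof.
move=> hX hY; case: hE => _ H.
rewrite -{1}(vscale1 X) H //; last exact: sm_cst.
by apply/funext => x; rewrite mul1r.
Qed.

Lemma eta0 : eta vzero = (fun _ => 0).
Proof.
have E : vadd (@vzero R M) vzero = vzero.
  by apply/funext => g; apply/funext => x; rewrite /vadd /vzero addr0.
have := etaD vf_zero vf_zero; rewrite E => H.
apply/funext => x; have := congr1 (fun F => F x) H => /=.
set t := eta _ x; lra.
Qed.

Lemma etaS f X : sm f -> vf X -> eta (vscale f X) = (fun x => f x * eta X x).
Proof.
move=> sf hX; case: hE => _ H.
have E : forall Y, vadd Y (@vzero R M) = Y.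
  by move=> Y; apply/funext => g; apply/funext => x; rewrite /vadd /vzero addr0.
rewrite -{1}(E (vscale f X)) H //; last exact: vf_zero.
by rewrite eta0; apply/funext => x; rewrite addr0.
Qed.

Lemma etaN X : vf X -> eta (vopp X) = (fun x => - eta X x).
Proof.
move=> hX.
have E : forall Y, vopp Y = vscale (fun _ => -1) Y.
  by move=> Y; apply/funext => g; apply/funext => x; rewrite /vscale /vopp mulN1r.
rewrite E etaS //; last exact: sm_cst.
by apply/funext => x; rewrite mulN1r.
Qed.
End Form.
End Manifold.

Section AC.
Context {R : realType} {m : nat} {M : topologicalType} (A : smooth_atlas R m M).
Local Notation sm := (smooth A).
Local Notation vf := (is_vf A).
Variables (phi : @vfield R M -> @vfield R M) (xi : @vfield R M) (eta : @vfield R M -> (M -> R)).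
Hypothesis hac : almost_contact A phi xi eta.

Let hT : is_tensor11 A phi. Proof. by case: hac. Qed.
Let hxi : vf xi. Proof. by case: hac. Qed.
Let hE : is_1form A eta. Proof. by case: hac. Qed.
Let hsq : forall X, vf X -> phi (phi X) = vadd (vopp X) (vscale (eta X) xi).
Proof. by case: hac. Qed.
Let heta1 : eta xi = (fun _ => 1). Proof. by case: hac. Qed.

Ltac vfb := repeat first [ assumption | exact: vf_zero | apply: vf_br | apply: vf_add
  | apply: vf_opp | apply: vf_rscale | apply: vf_vscale | apply: (phi_vf hT)
  | exact: sm_cst | apply: vf_sm | apply: (eta_sm hE)
  | apply: sm_add | apply: sm_mul | apply: sm_sub | apply: sm_opp | apply: sm_scal ].

Lemma phi_xi : phi xi = vzero.
Proof.
have a : phi (phi xi) = vzero.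
  rewrite hsq // heta1; apply/funext => g; apply/funext => x.
  by rewrite /vadd /vopp /vscale /vzero; ring.
pose c := eta (phi xi).
have sc : sm c by vfb.
have Pxi : phi xi = vscale c xi.
  have H := hsq (phi_vf hT hxi); rewrite a (phi0 hT) in H.
  apply/funext => g; apply/funext => x; have := congr1 (fun F => F g x) H.
  rewrite /vadd /vopp /vscale /vzero /=; set t := phi xi g x; set u := _ * _; lra.
have c0 : forall x, c x = 0.
  move=> x; have H := a; rewrite Pxi (phiS hT sc hxi) Pxi in H.
  have := congr1 (fun F => eta F x) H.
  rewrite (eta0 hE) (etaS hE sc); last by vfb.
  rewrite (etaS hE sc hxi) heta1 /= mulr1 => /eqP; rewrite mulf_eq0 orbb => /eqP //.
apply/funext => g; apply/funext => x; rewrite Pxi /vscale /vzero c0; ring.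
Qed.

Lemma eta_phi X : vf X -> eta (phi X) = (fun _ => 0).
Proof.
move=> hX.
have H1 := hsq (phi_vf hT hX).
rewrite (hsq hX) (phiD hT) ?(phiN hT) ?(phiS hT) ?phi_xi in H1; try vfb.
have H2 : vscale (eta (phi X)) xi = vzero.
  apply/funext => g; apply/funext => x; have := congr1 (fun F => F g x) H1.
  rewrite /vadd /vopp /vscale /vzero /=; set t := phi X g x; set u := _ * xi g x; lra.
have := congr1 eta H2; rewrite (etaS hE) ?(eta0 hE) ?heta1; try vfb.
by move=> H; apply/funext => x; have := congr1 (fun F => F x) H => /=; rewrite mulr1.
Qed.

Let hol := contact_hol A phi xi eta.

Lemma hol_xi X : hol X -> vbr X xi = vscale (eta (vbr X xi)) xi.
Proof.
move=> [hX HX]; have H := HX xi hxi.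
rewrite /lie_phi phi_xi (br0_r hX) (eta0 hE) in H.
have PB : phi (vbr X xi) = vzero.
  apply/funext => g; apply/funext => x; have := congr1 (fun F => F g x) H.
  rewrite /vadd /vopp /vscale /vzero /=; set t := phi _ g x; lra.
have H2 := hsq (vf_br hX hxi); rewrite PB (phi0 hT) in H2.
apply/funext => g; apply/funext => x; have := congr1 (fun F => F g x) H2.
rewrite /vadd /vopp /vscale /vzero /=; set t := vbr X xi g x; set u := _ * xi g x; lra.
Qed.

Lemma hol_comm X U : hol X -> vf U ->
  vbr X (phi U) = vadd (phi (vbr X U)) (vscale (eta (vbr X (phi U))) xi).
Proof.
move=> [hX HX] hU; have H := HX U hU; rewrite /lie_phi in H.
apply/funext => g; apply/funext => x; have := congr1 (fun F => F g x) H.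
rewrite /vadd /vopp /vscale /=; set t := vbr X _ g x; set u := _ * xi g x; lra.
Qed.


Lemma hol_br X Z : hol X -> hol Z -> hol (vbr X Z).
Proof.
move=> hXh hZh; have [hX HX] := hXh; have [hZ HZ] := hZh.
split; first by vfb.
move=> Y hY; have hPY := phi_vf hT hY.
suff [c sc Hc] : exists2 c, sm c & lie_phi phi (vbr X Z) Y = vscale c xi.
  suff -> : eta (vbr (vbr X Z) (phi Y)) = c by [].
  have := congr1 eta Hc; rewrite /lie_phi (etaD hE) //; try vfb.
  rewrite (etaN hE) ?eta_phi ?(etaS hE sc hxi) ?heta1; try vfb.
  move=> H; apply/funext => x; have := congr1 (fun F => F x) H => /=.
  set t := eta _ x; lra.
pose bZ := eta (vbr Z (phi Y)); pose bX := eta (vbr X (phi Y)).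
pose b1 := eta (vbr X (phi (vbr Z Y))); pose b2 := eta (vbr Z (phi (vbr X Y))).
pose aX := eta (vbr X xi); pose aZ := eta (vbr Z xi).
exists (fun x => b1 x + X bZ x + bZ x * aX x - (b2 x + Z bX x + bX x * aZ x)).
  by vfb.
have f3 : vbr X (vbr Z (phi Y)) = vadd (vadd (phi (vbr X (vbr Z Y))) (vscale b1 xi))
    (vadd (vscale (X bZ) xi) (vscale bZ (vscale aX xi))).
  rewrite (hol_comm hZh hY).
  rewrite (brD_r hX); try vfb.
  rewrite (hol_comm hXh); try vfb.
  rewrite (brS_r hX); try vfb.
  by rewrite (hol_xi hXh).
have f4 : vbr Z (vbr X (phi Y)) = vadd (vadd (phi (vbr Z (vbr X Y))) (vscale b2 xi))
    (vadd (vscale (Z bX) xi) (vscale bX (vscale aZ xi))).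
  rewrite (hol_comm hXh hY).
  rewrite (brD_r hZ); try vfb.
  rewrite (hol_comm hZh); try vfb.
  rewrite (brS_r hZ); try vfb.
  by rewrite (hol_xi hZh).
have f1 := br_jacobi hX hZ hPY.
have f2 : phi (vbr (vbr X Z) Y) =
    vadd (phi (vbr X (vbr Z Y))) (vopp (phi (vbr Z (vbr X Y)))).
  rewrite (br_jacobi hX hZ hY) (phiD hT) //; try vfb.
  by rewrite (phiN hT) //; vfb.
apply/funext => g; apply/funext => x.
have e1 := congr1 (fun F => F g x) f1.
have e2 := congr1 (fun F => F g x) f2.
have e3 := congr1 (fun F => F g x) f3.
have e4 := congr1 (fun F => F g x) f4.
move: e1 e2 e3 e4; rewrite /lie_phi /vadd /vopp /vscale /= => e1 e2 e3 e4.
lra.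
Qed.

Lemma hol_sub : lie_subalgebra A hol.
Proof.
split.
- by move=> X [].
- split; first exact: vf_zero.
  move=> Y hY; rewrite /lie_phi (br0_l (phi_vf hT hY)) (br0_l hY) (phi0 hT) (eta0 hE).
  by apply/funext => g; apply/funext => x; rewrite /vadd /vopp /vscale /vzero; ring.
- move=> X Z [hX HX] [hZ HZ]; split; first by vfb.
  move=> Y hY; have h1 := HX Y hY; have h2 := HZ Y hY.
  rewrite /lie_phi in h1 h2 *.
  have hPY := phi_vf hT hY.
  rewrite (brD_l hX hZ hPY) (brD_l hX hZ hY) (phiD hT) ?(etaD hE (vf_br hX hPY) (vf_br hZ hPY)); try vfb.
  apply/funext => g; apply/funext => x.
  have e1 := congr1 (fun F => F g x) h1; have e2 := congr1 (fun F => F g x) h2.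
  move: e1 e2; rewrite /vadd /vopp /vscale /= => e1 e2; lra.
- move=> c X [hX HX]; split; first by vfb.
  move=> Y hY; have h1 := HX Y hY; rewrite /lie_phi in h1 *.
  have phiZ : forall V, vf V -> phi (rscale c V) = rscale c (phi V).
    by move=> V hV; exact: (phiS hT (sm_cst c) hV).
  have etaZ : forall V, vf V -> eta (rscale c V) = (fun x => c * eta V x).
    by move=> V hV; exact: (etaS hE (sm_cst c) hV).
  rewrite (brZ_l c hX (phi_vf hT hY)) (brZ_l c hX hY) phiZ ?etaZ; try vfb.
  apply/funext => g; apply/funext => x.
  have e1 := congr1 (fun F => F g x) h1.
  move: e1; rewrite /vadd /vopp /vscale /rscale /= => e1.
  rewrite -mulrA -e1; ring.
- by move=> X Z; exact: hol_br.
Qed.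
End AC.

End Helpers.
Unset Implicit Arguments.

Theorem proposition3p1 (R : realType) (n : nat) (M : topologicalType)
    (hM : hausdorff_space M) (scM : @second_countable M)
    (A : smooth_atlas R (2 * n + 1) M)
    (phi : @vfield R M -> @vfield R M) (xi : @vfield R M) (eta : @vfield R M -> (M -> R))
    (hac : almost_contact A phi xi eta) (hnormal : normal_ac A phi xi eta) :
  lie_subalgebra A (contact_hol A phi xi eta).
Proof. exact: (@Helpers.hol_sub R (2 * n + 1) M A phi xi eta hac). Qed.
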